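(* Let $(H,\Delta)$ be a Hopf algebra and $(A,\alpha)$ a Galois coaction with $H$-coinvariant local units. Let $p\in M(A^\alpha)$ be an idempotent with $A^\alpha pA^\alpha=A^\alpha$. Then $\alpha$ restricts to a Galois coaction $\beta$ on $B=pAp$, and $(B,\beta)$ is $H$-equivariantly Morita equivalent to $(A,\alpha)$ (via the context $(Ap,pA)$).
   Context: An $H$-comodule algebra $(A,\alpha)$ is a (possibly non-unital) algebra with algebra map $\alpha:A\to A\otimes H$ making $A$ a right $H$-comodule; $A^\alpha=\{a:\alpha(a)=a\otimes1\}$; $H$-coinvariant local units: every finite subset of $A$ admits an idempotent $e\in A^\alpha$ acting as two-sided unit on it. $(A,\alpha)$ is a Galois coaction if the Galois map $A\otimes_{A^\alpha}A\to A\otimes H$, $a\otimes b\mapsto(a\otimes1)\alpha(b)$, is bijective. $M(D)$ is the multiplier algebra of $D$ (pairs $(\lambda,\rho)$ of linear maps on $D$ with $\lambda(xy)=\lambda(x)y$, $\rho(xy)=x\rho(y)$, $x\lambda(y)=\rho(x)y$); since $A^\alpha\subseteq A$ is non-degenerate under the coinvariant local units assumption, $M(A^\alpha)\subseteq M(A)$, so $pAp$ makes sense. An $H$-equivariant Morita context between comodule algebras is a Morita context (associative pairings $A_{ij}\times A_{jl}\to A_{il}$) all of whose spaces are $H$-comodules and whose multiplications are comodule maps; strict if all $A_{ij}\otimes_{A_{jj}}A_{ji}\to A_{ii}$ are bijective; equivariant Morita equivalence means existence of a strict equivariant Morita context. *)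

(* Defs.v *)
(* Tensor products over a field k are represented by finite
   formal sums (seq of pairs/triples) modulo the equality induced by all
   k-valued multilinear (resp. balanced bilinear) forms; over a field this is
   exactly equality in the (balanced) tensor product. *)
From HB Require Import structures.
From mathcomp Require Import all_boot all_order all_algebra.
Set Implicit Arguments. Unset Strict Implicit. Unset Printing Implicit Defensive.
Import GRing.Theory.
Local Open Scope ring_scope.

Definition bilin (k : fieldType) (U V : lmodType k) (f : U -> V -> k) : Prop :=
  (forall v a u1 u2, f (a *: u1 + u2) v = a * f u1 v + f u2 v) /\
  (forall u a v1 v2, f u (a *: v1 + v2) = a * f u v1 + f u v2).

Definition trilin (k : fieldType) (U V W : lmodType k) (f : U -> V -> W -> k) : Prop :=
  [/\ (forall v w a u1 u2, f (a *: u1 + u2) v w = a * f u1 v w + f u2 v w),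
      (forall u w a v1 v2, f u (a *: v1 + v2) w = a * f u v1 w + f u v2 w) &
      (forall u v a w1 w2, f u v (a *: w1 + w2) = a * f u v w1 + f u v w2)].

Definition teq2 (k : fieldType) (U V : lmodType k) (s t : seq (U * V)) : Prop :=
  forall f : U -> V -> k, bilin f ->
    \sum_(x <- s) f x.1 x.2 = \sum_(x <- t) f x.1 x.2.

Definition teq3 (k : fieldType) (U V W : lmodType k) (s t : seq (U * V * W)) : Prop :=
  forall f : U -> V -> W -> k, trilin f ->
    \sum_(x <- s) f x.1.1 x.1.2 x.2 = \sum_(x <- t) f x.1.1 x.1.2 x.2.

Definition tscale (k : fieldType) (U V : lmodType k) (a : k) (s : seq (U * V)) :=
  [seq (a *: x.1, x.2) | x <- s].

Record is_hopf (k : fieldType) (H : algType k) (D : H -> seq (H * H))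
    (eps : H -> k) (S : H -> H) : Prop := {
  D_lin : forall a g h, teq2 (D (a *: g + h)) (tscale a (D g) ++ D h);
  D_mul : forall g h, teq2 (D (g * h)) [seq (x.1 * y.1, x.2 * y.2) | x <- D g, y <- D h];
  D_one : teq2 (D 1) [:: (1, 1)];
  D_coass : forall h, teq3 [seq ((y.1, y.2), x.2) | x <- D h, y <- D x.1]
                           [seq ((x.1, y.1), y.2) | x <- D h, y <- D x.2];
  eps_lin : forall a g h, eps (a *: g + h) = a * eps g + eps h;
  eps_mul : forall g h, eps (g * h) = eps g * eps h;
  eps_one : eps 1 = 1;
  counit_l : forall h, \sum_(x <- D h) eps x.1 *: x.2 = h;
  counit_r : forall h, \sum_(x <- D h) eps x.2 *: x.1 = h;
  S_lin : forall a g h, S (a *: g + h) = a *: S g + S h;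
  antipode_l : forall h, \sum_(x <- D h) S x.1 * x.2 = eps h *: 1;
  antipode_r : forall h, \sum_(x <- D h) x.1 * S x.2 = eps h *: 1 }.

Record is_nualg (k : fieldType) (A : lmodType k) (m : A -> A -> A) : Prop := {
  nu_assoc : forall x y z, m (m x y) z = m x (m y z);
  nu_linl : forall a x y z, m (a *: x + y) z = a *: m x z + m y z;
  nu_linr : forall a x y z, m z (a *: x + y) = a *: m z x + m z y }.

Record is_comod_alg (k : fieldType) (H : algType k) (D : H -> seq (H * H))
    (eps : H -> k) (A : lmodType k) (m : A -> A -> A) (al : A -> seq (A * H)) : Prop := {
  ca_alg : is_nualg m;
  al_lin : forall a x y, teq2 (al (a *: x + y)) (tscale a (al x) ++ al y);
  al_mul : forall x y, teq2 (al (m x y)) [seq (m u.1 v.1, u.2 * v.2) | u <- al x, v <- al y];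
  al_coass : forall x, teq3 [seq ((y.1, y.2), u.2) | u <- al x, y <- al u.1]
                            [seq ((u.1, y.1), y.2) | u <- al x, y <- D u.2];
  al_counit : forall x, \sum_(u <- al x) eps u.2 *: u.1 = x }.

Definition coinv (k : fieldType) (H : algType k) (A : lmodType k)
    (al : A -> seq (A * H)) (x : A) : Prop := teq2 (al x) [:: (x, 1)].

Definition coinv_local_units (k : fieldType) (H : algType k) (A : lmodType k)
    (m : A -> A -> A) (al : A -> seq (A * H)) : Prop :=
  forall s : seq A, exists e, [/\ coinv al e, m e e = e &
    forall x, x \in s -> m e x = x /\ m x e = x].

Definition in2 (k : fieldType) (A : lmodType k) (X Y : A -> Prop) (s : seq (A * A)) :=
  forall u, u \in s -> X u.1 /\ Y u.2.

(* equality in X (x)_R Y (X,Y,R subsets of A, R acting by multiplication) *)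
Definition bal_eq (k : fieldType) (A : lmodType k) (m : A -> A -> A)
    (X Y R : A -> Prop) (s t : seq (A * A)) : Prop :=
  forall f : A -> A -> k, bilin f ->
    (forall x y r, X x -> Y y -> R r -> f (m x r) y = f x (m r y)) ->
    \sum_(u <- s) f u.1 u.2 = \sum_(u <- t) f u.1 u.2.

Definition mulmap (k : fieldType) (A : lmodType k) (m : A -> A -> A) (s : seq (A * A)) :=
  \sum_(u <- s) m u.1 u.2.

Definition mult_bij (k : fieldType) (A : lmodType k) (m : A -> A -> A)
    (X Y R T : A -> Prop) : Prop :=
  (forall s t, in2 X Y s -> in2 X Y t -> mulmap m s = mulmap m t -> bal_eq m X Y R s t) /\
  (forall z, T z -> exists s, in2 X Y s /\ mulmap m s = z).

(* Galois map  a (x) b |-> (a (x) 1) al(b) *)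
Definition galmap (k : fieldType) (H : algType k) (A : lmodType k)
    (m : A -> A -> A) (al : A -> seq (A * H)) (s : seq (A * A)) : seq (A * H) :=
  flatten [seq [seq (m x.1 y.1, y.2) | y <- al x.2] | x <- s].

Definition galois_on (k : fieldType) (H : algType k) (A : lmodType k)
    (m : A -> A -> A) (al : A -> seq (A * H)) (C : A -> Prop) : Prop :=
  (forall s t, in2 C C s -> in2 C C t -> teq2 (galmap m al s) (galmap m al t) ->
     bal_eq m C C (fun x => C x /\ coinv al x) s t) /\
  (forall u : seq (A * H), (forall v, v \in u -> C v.1) ->
     exists s, in2 C C s /\ teq2 (galmap m al s) u).

Definition galois_coaction (k : fieldType) (H : algType k) (D : H -> seq (H * H))
    (eps : H -> k) (A : lmodType k) (m : A -> A -> A) (al : A -> seq (A * H)) : Prop :=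
  is_comod_alg D eps m al /\ galois_on m al (fun _ => True).

Definition subspace (k : fieldType) (A : lmodType k) (C : A -> Prop) : Prop :=
  C 0 /\ forall a x y, C x -> C y -> C (a *: x + y).

Definition subcomod (k : fieldType) (H : algType k) (A : lmodType k)
    (al : A -> seq (A * H)) (C : A -> Prop) : Prop :=
  forall x, C x -> exists s : seq (A * H), (forall u, u \in s -> C u.1) /\ teq2 (al x) s.

Definition is_multiplier (k : fieldType) (A : lmodType k) (m : A -> A -> A)
    (D : A -> Prop) (lam rho : A -> A) : Prop :=
  (forall a x y, D x -> D y ->
     lam (a *: x + y) = a *: lam x + lam y /\ rho (a *: x + y) = a *: rho x + rho y) /\
  (forall x y, D x -> D y ->
     [/\ D (lam x), D (rho x), lam (m x y) = m (lam x) y,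
         rho (m x y) = m x (rho y) & m x (lam y) = m (rho x) y]).

(* p = (lam, rho) is idempotent in M(D) *)
Definition mult_idem (k : fieldType) (A : lmodType k) (D : A -> Prop) (lam rho : A -> A) :=
  forall x, D x -> lam (lam x) = lam x /\ rho (rho x) = rho x.

Definition mult_full (k : fieldType) (A : lmodType k) (m : A -> A -> A)
    (D : A -> Prop) (lam : A -> A) : Prop :=
  forall z, D z -> exists s, in2 D D s /\ z = \sum_(u <- s) m u.1 (lam u.2).

(* p a, a p, p a p computed via a coinvariant local unit e of a:
   p a = (p e) a = lam(e) a, a p = a (e p) = a rho(e). *)
Definition pA_set (k : fieldType) (H : algType k) (A : lmodType k) (m : A -> A -> A)
    (al : A -> seq (A * H)) (lam : A -> A) (x : A) : Prop :=
  exists a e, [/\ coinv al e, m e a = a & x = m (lam e) a].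

Definition Ap_set (k : fieldType) (H : algType k) (A : lmodType k) (m : A -> A -> A)
    (al : A -> seq (A * H)) (rho : A -> A) (x : A) : Prop :=
  exists a e, [/\ coinv al e, m a e = a & x = m a (rho e)].

Definition pAp_set (k : fieldType) (H : algType k) (A : lmodType k) (m : A -> A -> A)
    (al : A -> seq (A * H)) (lam rho : A -> A) (x : A) : Prop :=
  exists a e, [/\ coinv al e, m e a = a, m a e = a & x = m (m (lam e) a) (rho e)].

Definition mulclosed (k : fieldType) (A : lmodType k) (m : A -> A -> A)
    (X Y Z : A -> Prop) : Prop := forall x y, X x -> Y y -> Z (m x y).

(* Main.v *)
Require Import Defs.
From HB Require Import structures.
From mathcomp Require Import all_boot all_order all_algebra.
From Stdlib Require Import ClassicalEpsilon.
Set Implicit Arguments. Unset Strict Implicit. Unset Printing Implicit Defensive.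
Import GRing.Theory.
Local Open Scope ring_scope.

Section Gen.
Variable k : fieldType.

Lemma lin_sum (U V : lmodType k) (phi : U -> V) :
  (forall a x y, phi (a *: x + y) = a *: phi x + phi y) ->
  forall (I : Type) (r : seq I) (F : I -> U),
    phi (\sum_(i <- r) F i) = \sum_(i <- r) phi (F i).
Proof.
move=> hl I r F.
have h0 : phi 0 = 0.
  by have := hl (-1) 0 0; rewrite scaler0 addr0 scaleN1r addNr.
have hD : {morph phi : x y / x + y}.
  by move=> x y; have := hl 1 x y; rewrite !scale1r.
exact: (big_morph phi hD h0).
Qed.

Lemma fl_sum (U : lmodType k) (phi : U -> k) :
  (forall a x y, phi (a *: x + y) = a * phi x + phi y) ->
  forall (I : Type) (r : seq I) (F : I -> U),
    phi (\sum_(i <- r) F i) = \sum_(i <- r) phi (F i).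
Proof.
move=> hl I r F.
have h0 : phi 0 = 0.
  by have := hl (-1) 0 0; rewrite scaler0 addr0 mulN1r addNr.
have hD : {morph phi : x y / x + y}.
  by move=> x y; have := hl 1 x y; rewrite scale1r mul1r.
exact: (big_morph phi hD h0).
Qed.

Lemma fl_scale (U : lmodType k) (phi : U -> k) :
  (forall a x y, phi (a *: x + y) = a * phi x + phi y) ->
  forall a x, phi (a *: x) = a * phi x.
Proof.
move=> hl a x.
have h0 : phi 0 = 0.
  by have := hl (-1) 0 0; rewrite scaler0 addr0 mulN1r addNr.
by have := hl a x 0; rewrite addr0 h0 addr0.
Qed.

Lemma lin_scale (U V : lmodType k) (phi : U -> V) :
  (forall a x y, phi (a *: x + y) = a *: phi x + phi y) ->
  forall a x, phi (a *: x) = a *: phi x.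
Proof.
move=> hl a x.
have h0 : phi 0 = 0.
  by have := hl (-1) 0 0; rewrite scaler0 addr0 scaleN1r addNr.
by have := hl a x 0; rewrite addr0 h0 addr0.
Qed.

Lemma teq2_refl (U V : lmodType k) (s : seq (U * V)) : teq2 s s.
Proof. by []. Qed.
Lemma teq2_sym (U V : lmodType k) (s t : seq (U * V)) : teq2 s t -> teq2 t s.
Proof. by move=> h f hf; rewrite h. Qed.
Lemma teq2_trans (U V : lmodType k) (s t u : seq (U * V)) :
  teq2 s t -> teq2 t u -> teq2 s u.
Proof. by move=> h1 h2 f hf; rewrite h1 // h2. Qed.
Lemma teq2_cat (U V : lmodType k) (s t s' t' : seq (U * V)) :
  teq2 s s' -> teq2 t t' -> teq2 (s ++ t) (s' ++ t').
Proof. by move=> h1 h2 f hf; rewrite !big_cat /= h1 // h2. Qed.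

Lemma teq2_map (U V : lmodType k) (phi : U -> U) (s t : seq (U * V)) :
  (forall a x y, phi (a *: x + y) = a *: phi x + phi y) ->
  teq2 s t -> teq2 [seq (phi u.1, u.2) | u <- s] [seq (phi u.1, u.2) | u <- t].
Proof.
move=> hl h f [f1 f2]; rewrite !big_map /=.
apply: (h (fun x y => f (phi x) y)); split.
  by move=> v a u1 u2; rewrite hl f1.
by move=> u a v1 v2; rewrite f2.
Qed.

Lemma lin_zero (U V : lmodType k) (phi : U -> V) :
  (forall a x y, phi (a *: x + y) = a *: phi x + phi y) -> phi 0 = 0.
Proof. by move=> hl; have := hl (-1) 0 0; rewrite scaler0 addr0 scaleN1r addNr. Qed.

End Gen.
Section Main.
Variables (k : fieldType) (H : algType k) (A : lmodType k) (m : A -> A -> A)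
  (al : A -> seq (A * H)) (lam rho : A -> A).
Hypothesis mA : is_nualg m.
Hypothesis alM : forall x y, teq2 (al (m x y)) [seq (m u.1 v.1, u.2 * v.2) | u <- al x, v <- al y].
Hypothesis hlu : coinv_local_units m al.
Hypothesis hM : is_multiplier m (coinv al) lam rho.
Hypothesis hI : mult_idem (coinv al) lam rho.
Hypothesis hF : mult_full m (coinv al) lam.

Local Notation "x ** y" := (m x y) (at level 40, left associativity).
Local Notation D := (coinv al).

Lemma mlinl : forall c z x y, (c *: x + y) ** z = c *: (x ** z) + y ** z.
Proof. by move=> c z x y; apply: (nu_linl mA). Qed.
Lemma mlinr : forall c z x y, z ** (c *: x + y) = c *: (z ** x) + z ** y.
Proof. by move=> c z x y; apply: (nu_linr mA). Qed.
Lemma mA_ x y z : x ** y ** z = x ** (y ** z).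
Proof. exact: (nu_assoc mA). Qed.

Lemma m0l x : 0 ** x = 0.
Proof. by have := mlinl (-1) x 0 0; rewrite scaler0 addr0 scaleN1r addNr. Qed.
Lemma m0r x : x ** 0 = 0.
Proof. by have := mlinr (-1) x 0 0; rewrite scaler0 addr0 scaleN1r addNr. Qed.
Lemma mDl x y z : (x + y) ** z = x ** z + y ** z.
Proof. by have := mlinl 1 z x y; rewrite !scale1r. Qed.
Lemma mDr x y z : z ** (x + y) = z ** x + z ** y.
Proof. by have := mlinr 1 z x y; rewrite !scale1r. Qed.
Lemma mZl a x z : (a *: x) ** z = a *: (x ** z).
Proof. by have := mlinl a z x 0; rewrite !addr0 m0l addr0. Qed.
Lemma mZr a x z : z ** (a *: x) = a *: (z ** x).
Proof. by have := mlinr a z x 0; rewrite !addr0 m0r addr0. Qed.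
Lemma msuml (I : Type) (r : seq I) (F : I -> A) z :
  (\sum_(i <- r) F i) ** z = \sum_(i <- r) (F i ** z).
Proof.
have hl : forall c x y, (c *: x + y) ** z = c *: (x ** z) + y ** z by move=> c x y; rewrite mlinl.
exact: (lin_sum (phi := fun x => x ** z) hl r F).
Qed.
Lemma msumr (I : Type) (r : seq I) (F : I -> A) z :
  z ** (\sum_(i <- r) F i) = \sum_(i <- r) (z ** F i).
Proof.
have hl : forall c x y, z ** (c *: x + y) = c *: (z ** x) + z ** y by move=> c x y; rewrite mlinr.
exact: (lin_sum (phi := fun x => z ** x) hl r F).
Qed.

Lemma bl_suml (U V : lmodType k) (f : U -> V -> k) : bilin f ->
  forall (I : Type) (r : seq I) (F : I -> U) y,
  f (\sum_(i <- r) F i) y = \sum_(i <- r) f (F i) y.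
Proof.
move=> [h1 h2] I r F y.
have hl : forall c x z, f (c *: x + z) y = c * f x y + f z y by move=> c x z; rewrite h1.
exact: (fl_sum (phi := fun x => f x y) hl r F).
Qed.
Lemma bl_sumr (U V : lmodType k) (f : U -> V -> k) : bilin f ->
  forall (I : Type) (r : seq I) (F : I -> V) x,
  f x (\sum_(i <- r) F i) = \sum_(i <- r) f x (F i).
Proof.
move=> [h1 h2] I r F y.
have hl : forall c x z, f y (c *: x + z) = c * f y x + f y z by move=> c x z; rewrite h2.
exact: (fl_sum (phi := fun x => f y x) hl r F).
Qed.

Lemma al_coinv_l c x : D c ->
  teq2 (al (c ** x)) [seq (c ** u.1, u.2) | u <- al x].
Proof.
move=> hc f [f1 f2]; rewrite (alM c x) // big_allpairs_dep /= exchange_big /= big_map.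
apply: eq_bigr => w _.
have := hc (fun u h => f (u ** w.1) (h * w.2)); rewrite big_cons big_nil addr0 mul1r /=.
apply; split.
  by move=> v a u1 u2; rewrite mlinl f1.
by move=> u a v1 v2; rewrite mulrDl -scalerAl f2.
Qed.

Lemma al_coinv_r c x : D c ->
  teq2 (al (x ** c)) [seq (u.1 ** c, u.2) | u <- al x].
Proof.
move=> hc f [f1 f2]; rewrite (alM x c) // big_allpairs_dep /= big_map.
apply: eq_bigr => w _.
have := hc (fun u h => f (w.1 ** u) (w.2 * h)); rewrite big_cons big_nil addr0 mulr1 /=.
apply; split.
  by move=> v a u1 u2; rewrite mlinr f1.
by move=> u a v1 v2; rewrite mulrDr -scalerAr f2.
Qed.

Lemma coinvM x y : D x -> D y -> D (x ** y).
Proof.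
move=> hx hy; apply: (teq2_trans (al_coinv_l y hx)).
have hl : forall c u v, x ** (c *: u + v) = c *: (x ** u) + x ** v by move=> *; rewrite mlinr.
have := teq2_map hl hy.
by rewrite /= => h; apply: teq2_trans h _.
Qed.


Lemma hMm x y : D x -> D y -> [/\ D (lam x), D (rho x), lam (x ** y) = lam x ** y,
         rho (x ** y) = x ** rho y & x ** lam y = rho x ** y].
Proof. exact: (proj2 hM). Qed.
Lemma Dlam x : D x -> D (lam x). Proof. by move=> h; case: (hMm h h). Qed.
Lemma Drho x : D x -> D (rho x). Proof. by move=> h; case: (hMm h h). Qed.
Lemma lamM x y : D x -> D y -> lam (x ** y) = lam x ** y. Proof. by move=> h1 h2; case: (hMm h1 h2). Qed.
Lemma rhoM x y : D x -> D y -> rho (x ** y) = x ** rho y. Proof. by move=> h1 h2; case: (hMm h1 h2). Qed.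
Lemma lamrho x y : D x -> D y -> x ** lam y = rho x ** y. Proof. by move=> h1 h2; case: (hMm h1 h2). Qed.
Lemma lamI x : D x -> lam (lam x) = lam x. Proof. by move=> h; case: (hI h). Qed.
Lemma rhoI x : D x -> rho (rho x) = rho x. Proof. by move=> h; case: (hI h). Qed.

Lemma lu (s : seq A) : exists e, D e /\ forall x, x \in s -> e ** x = x /\ x ** e = x.
Proof. by case: (hlu s) => e [h1 _ h3]; exists e. Qed.

Lemma ex_u a : exists e, D e /\ e ** a = a /\ a ** e = a.
Proof. by case: (lu [:: a]) => e [h1 h2]; exists e; split => //; apply: h2; rewrite mem_seq1. Qed.
Definition uu a := proj1_sig (constructive_indefinite_description _ (ex_u a)).
Lemma uuP a : D (uu a) /\ uu a ** a = a /\ a ** uu a = a.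
Proof. exact: (proj2_sig (constructive_indefinite_description _ (ex_u a))). Qed.
Definition pl a := lam (uu a) ** a.
Definition pr a := a ** rho (uu a).

Lemma plE e a : D e -> e ** a = a -> pl a = lam e ** a.
Proof.
move=> he hea; rewrite /pl; case: (uuP a) => h0 [h1 _].
case: (lu [:: e; uu a]) => g [hg hgs].
have [ge _] := hgs e (mem_head _ _).
have [gu _] : g ** uu a = uu a /\ uu a ** g = uu a by apply: hgs; rewrite !inE eqxx orbT.
have key : forall e', D e' -> e' ** a = a -> g ** e' = e' -> lam e' ** a = lam g ** a.
  by move=> e' he' h ge'; rewrite -{1}ge' lamM // mA_ h.
by rewrite (key e) // (key (uu a)).
Qed.

Lemma prE e a : D e -> a ** e = a -> pr a = a ** rho e.
Proof.
move=> he hea; rewrite /pr; case: (uuP a) => h0 [_ h1].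
case: (lu [:: e; uu a]) => g [hg hgs].
have [_ ge] := hgs e (mem_head _ _).
have [_ gu] : g ** uu a = uu a /\ uu a ** g = uu a by apply: hgs; rewrite !inE eqxx orbT.
have key : forall e', D e' -> a ** e' = a -> e' ** g = e' -> a ** rho e' = a ** rho g.
  by move=> e' he' h ge'; rewrite -{1}ge' rhoM // -mA_ h.
by rewrite (key e) // (key (uu a)).
Qed.

Lemma lu2 x y : exists e, D e /\ [/\ e ** x = x, x ** e = x, e ** y = y & y ** e = y].
Proof.
case: (lu [:: x; y]) => e [he h]; exists e; split => //.
case: (h x (mem_head _ _)) => h1 h2.
by have [] : e ** y = y /\ y ** e = y by apply: h; rewrite !inE eqxx orbT.
Qed.

Lemma pl_lin c x y : pl (c *: x + y) = c *: pl x + pl y.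
Proof.
case: (lu2 x y) => e [he [h1 h2 h3 h4]].
have h5 : e ** (c *: x + y) = c *: x + y by rewrite mlinr h1 h3.
by rewrite (plE he h5) (plE he h1) (plE he h3) mlinr.
Qed.
Lemma pr_lin c x y : pr (c *: x + y) = c *: pr x + pr y.
Proof.
case: (lu2 x y) => e [he [h1 h2 h3 h4]].
have h5 : (c *: x + y) ** e = c *: x + y by rewrite mlinl h2 h4.
by rewrite (prE he h5) (prE he h2) (prE he h4) mlinl.
Qed.

Lemma pl_mul x y : pl (x ** y) = pl x ** y.
Proof.
case: (ex_u x) => e [he [h1 h2]].
have h3 : e ** (x ** y) = x ** y by rewrite -mA_ h1.
by rewrite (plE he h1) (plE he h3) mA_.
Qed.
Lemma pr_mul x y : pr (x ** y) = x ** pr y.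
Proof.
case: (ex_u y) => e [he [h1 h2]].
have h3 : (x ** y) ** e = x ** y by rewrite mA_ h2.
by rewrite (prE he h2) (prE he h3) mA_.
Qed.
Lemma plpr x y : x ** pl y = pr x ** y.
Proof.
case: (lu2 x y) => e [he [h1 h2 h3 h4]].
rewrite (plE he h3) (prE he h2).
by rewrite -{1}h2 -{2}h3 mA_ -(mA_ e) lamrho // !mA_.
Qed.

Lemma pl_D c : D c -> pl c = lam c.
Proof. by move=> hc; case: (ex_u c) => e [he [h1 h2]]; rewrite (plE he h1) -lamM // h1. Qed.
Lemma pr_D c : D c -> pr c = rho c.
Proof. by move=> hc; case: (ex_u c) => e [he [h1 h2]]; rewrite (prE he h2) -rhoM // h2. Qed.

Lemma pl_idem x : pl (pl x) = pl x.
Proof.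
case: (ex_u x) => e [he [h1 h2]]; rewrite (plE he h1).
case: (lu2 e (lam e)) => g [hg [g1 g2 g3 g4]].
have h3 : g ** (lam e ** x) = lam e ** x by rewrite -mA_ g3.
rewrite (plE hg h3) -mA_ -lamM //; last exact: Dlam.
by rewrite g3 lamI.
Qed.
Lemma pr_idem x : pr (pr x) = pr x.
Proof.
case: (ex_u x) => e [he [h1 h2]]; rewrite (prE he h2).
case: (lu2 e (rho e)) => g [hg [g1 g2 g3 g4]].
have h3 : (x ** rho e) ** g = x ** rho e by rewrite mA_ g4.
rewrite (prE hg h3) mA_ -rhoM //; last exact: Drho.
by rewrite g4 rhoI.
Qed.
Lemma plprC x : pl (pr x) = pr (pl x).
Proof.
case: (ex_u x) => e [he [h1 h2]].
have h3 : pl x ** e = pl x by rewrite -pl_mul h2.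
by rewrite (prE he h2) (prE he h3) pl_mul.
Qed.

Lemma al_pl a : teq2 (al (pl a)) [seq (pl u.1, u.2) | u <- al a].
Proof.
case: (lu (a :: [seq u.1 | u <- al a])) => e [he hs].
have [h1 _] := hs a (mem_head _ _).
rewrite (plE he h1).
apply: teq2_trans (al_coinv_l _ (Dlam he)) _.
have -> : [seq (lam e ** u.1, u.2) | u <- al a] = [seq (pl u.1, u.2) | u <- al a].
  apply/eq_in_map => u hu.
  have [h2 _] : e ** u.1 = u.1 /\ u.1 ** e = u.1 by apply: hs; rewrite inE map_f ?orbT.
  by rewrite (plE he h2).
by [].
Qed.
Lemma al_pr a : teq2 (al (pr a)) [seq (pr u.1, u.2) | u <- al a].
Proof.
case: (lu (a :: [seq u.1 | u <- al a])) => e [he hs].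
have [_ h1] := hs a (mem_head _ _).
rewrite (prE he h1).
apply: teq2_trans (al_coinv_r _ (Drho he)) _.
have -> : [seq (u.1 ** rho e, u.2) | u <- al a] = [seq (pr u.1, u.2) | u <- al a].
  apply/eq_in_map => u hu.
  have [_ h2] : e ** u.1 = u.1 /\ u.1 ** e = u.1 by apply: hs; rewrite inE map_f ?orbT.
  by rewrite (prE he h2).
by [].
Qed.

Definition q a := pl (pr a).

Lemma q_lin c x y : q (c *: x + y) = c *: q x + q y.
Proof. by rewrite /q pr_lin // pl_lin. Qed.
Lemma pl_q a : pl (q a) = q a. Proof. by rewrite /q pl_idem. Qed.
Lemma pr_q a : pr (q a) = q a. Proof. by rewrite /q -plprC // pr_idem. Qed.
Lemma q_idem a : q (q a) = q a. Proof. by rewrite {1}/q pr_q pl_q. Qed.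
Lemma qq x y : q x ** q y = q (x ** pl y).
Proof.
rewrite /q -pl_mul // -plpr // pl_idem // plprC // -pr_mul //.
Qed.
Lemma q_bw a w : q (q a ** w) = q a ** q w.
Proof.
rewrite {2}/q plpr // pr_q /q pr_mul // pl_mul // -/(q a) pl_q //.
Qed.
Lemma q_wb a w : q (w ** q a) = q w ** q a.
Proof.
move: (pl_q a) (pr_q a); set b := q a => hpl hpr.
by rewrite /q pr_mul // hpr -pl_mul // -plpr // hpl.
Qed.


Lemma al_q a : teq2 (al (q a)) [seq (q u.1, u.2) | u <- al a].
Proof.
apply: teq2_trans (al_pl _) _.
have := teq2_map (pl_lin) (al_pr a).
by rewrite -map_comp.
Qed.

Lemma D_q c : D c -> D (q c).
Proof. by move=> hc; apply: teq2_trans (al_q c) _; exact: (teq2_map q_lin hc). Qed.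
Lemma D_pl c : D c -> D (pl c).
Proof. by move=> hc; apply: teq2_trans (al_pl c) _; exact: (teq2_map pl_lin hc). Qed.

Lemma pA_iff x : pA_set m al lam x <-> exists a, x = pl a.
Proof.
split; first by case=> a [e [he hea ->]]; exists a; rewrite (plE he hea).
by case=> a ->; case: (ex_u a) => e [he [h1 h2]]; exists a, e; split => //; rewrite (plE he h1).
Qed.
Lemma Ap_iff x : Ap_set m al rho x <-> exists a, x = pr a.
Proof.
split; first by case=> a [e [he hea ->]]; exists a; rewrite (prE he hea).
by case=> a ->; case: (ex_u a) => e [he [h1 h2]]; exists a, e; split => //; rewrite (prE he h2).
Qed.
Lemma B_iff x : pAp_set m al lam rho x <-> exists a, x = q a.
Proof.
split.
  case=> a [e [he h1 h2 ->]]; exists a.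
  by rewrite /q (prE he h2) pl_mul // (plE he h1).
case=> a ->; case: (ex_u a) => e [he [h1 h2]]; exists a, e; split => //.
by rewrite /q (prE he h2) pl_mul // (plE he h1).
Qed.

Definition G (ws : seq (A * A)) := \sum_(w <- ws) w.1 ** pl w.2.

Lemma dec (xs : seq A) : exists g ws, [/\ D g, (forall w, w \in ws -> D w.1 /\ D w.2),
  g = G ws & forall x, x \in xs -> g ** x = x /\ x ** g = x].
Proof.
case: (lu xs) => g [hg hs]; case: (hF hg) => ws [hws hgeq].
exists g, ws; split => //.
by rewrite hgeq /G; apply: eq_big_seq => u hu; case: (hws u hu) => _ h; rewrite pl_D.
Qed.

Local Notation B := (pAp_set m al lam rho).
Local Notation pA := (pA_set m al lam).
Local Notation Ap := (Ap_set m al rho).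
Local Notation T := (fun _ : A => True).

Lemma sub_range (phi : A -> A) (P : A -> Prop) :
  (forall a x y, phi (a *: x + y) = a *: phi x + phi y) ->
  (forall x, P x <-> exists a, x = phi a) -> subspace P.
Proof.
move=> hl hP; split.
  by apply/hP; exists 0; rewrite (lin_zero hl).
move=> c x y /hP [a ->] /hP [b ->]; apply/hP; exists (c *: a + b); by rewrite hl.
Qed.

Lemma subB : subspace B. Proof. exact: (sub_range q_lin B_iff). Qed.
Lemma subpA : subspace pA. Proof. exact: (sub_range pl_lin pA_iff). Qed.
Lemma subAp : subspace Ap. Proof. exact: (sub_range pr_lin Ap_iff). Qed.

Lemma mc_BBB : mulclosed m B B B.
Proof. by move=> x y /B_iff [a ->] /B_iff [b ->]; apply/B_iff; exists (a ** pl b); rewrite qq. Qed.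
Lemma mc_BpA : mulclosed m B pA pA.
Proof. by move=> x y /B_iff [a ->] /pA_iff [b ->]; apply/pA_iff; exists (pr a ** pl b); rewrite /q pl_mul. Qed.
Lemma mc_pAAp : mulclosed m pA Ap B.
Proof.
move=> x y /pA_iff [a ->] /Ap_iff [b ->]; apply/B_iff; exists (a ** b).
by rewrite /q pr_mul // pl_mul.
Qed.
Lemma mc_pAT : mulclosed m pA T pA.
Proof. by move=> x y /pA_iff [a ->] _; apply/pA_iff; exists (a ** y); rewrite pl_mul. Qed.
Lemma mc_ApB : mulclosed m Ap B Ap.
Proof.
move=> x y /Ap_iff [a ->] /B_iff [b ->]; apply/Ap_iff; exists (pr a ** q b).
by rewrite pr_mul // pr_q.
Qed.
Lemma mc_TAp : mulclosed m T Ap Ap.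
Proof. by move=> x y _ /Ap_iff [a ->]; apply/Ap_iff; exists (x ** a); rewrite pr_mul. Qed.

Lemma sc_range (phi : A -> A) (P : A -> Prop) :
  (forall x, P x <-> exists a, x = phi a) ->
  (forall a, teq2 (al (phi a)) [seq (phi u.1, u.2) | u <- al a]) -> subcomod al P.
Proof.
move=> hP hal x /hP [a ->]; exists [seq (phi u.1, u.2) | u <- al a]; split => //.
by move=> u /mapP [v _ ->]; apply/hP; exists v.1.
Qed.
Lemma scB : subcomod al B. Proof. exact: (sc_range B_iff al_q). Qed.
Lemma scpA : subcomod al pA. Proof. exact: (sc_range pA_iff al_pl). Qed.
Lemma scAp : subcomod al Ap. Proof. exact: (sc_range Ap_iff al_pr). Qed.

Lemma mb1 : mult_bij m pA Ap T B.
Proof.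
split.
  move=> s t hs ht hst f hf hbal.
  case: (lu [seq u.1 | u <- s ++ t]) => g [hg hgs].
  have key : forall u, u \in s ++ t -> f u.1 u.2 = f (pl g) (u.1 ** u.2).
    move=> u hu.
    have [h1 h2] : pA u.1 /\ Ap u.2.
      by move: hu; rewrite mem_cat => /orP [/hs|/ht].
    have [gu _] := hgs u.1 (map_f _ hu).
    have e1 : pl g ** u.1 = u.1.
      by rewrite -pl_mul // gu; case/pA_iff: h1 => a ->; rewrite pl_idem.
    rewrite -{1}e1; apply: hbal => //; apply/pA_iff; by exists g.
  have -> : \sum_(u <- s) f u.1 u.2 = \sum_(u <- s) f (pl g) (u.1 ** u.2).
    by apply: eq_big_seq => u hu; apply: key; rewrite mem_cat hu.
  have -> : \sum_(u <- t) f u.1 u.2 = \sum_(u <- t) f (pl g) (u.1 ** u.2).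
    by apply: eq_big_seq => u hu; apply: key; rewrite mem_cat hu orbT.
  by rewrite -!(bl_sumr hf); move: hst; rewrite /mulmap => ->.
move=> z /B_iff [a ->].
case: (ex_u a) => e [he [h1 h2]].
exists [:: (pl a, pr e)]; split.
  move=> u; rewrite mem_seq1 => /eqP -> /=; split.
    by apply/pA_iff; exists a.
  by apply/Ap_iff; exists e.
by rewrite /mulmap big_seq1 /= -pl_mul // -pr_mul // h2.
Qed.

Lemma mb2 : mult_bij m Ap pA B T.
Proof.
split.
  move=> s t hs ht hst f hf hbal.
  case: (dec [seq u.2 | u <- s ++ t]) => g [ws [hg hws hgG hgs]].
  pose F z := \sum_(w <- ws) f (pr (z ** w.1)) (pl w.2).
  have Flin : forall c x y, F (c *: x + y) = c * F x + F y.
    move=> c x y; rewrite /F mulr_sumr -big_split /=; apply: eq_bigr => w _.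
    by rewrite mlinl pr_lin; case: hf => -> _.
  have key : forall u, u \in s ++ t -> f u.1 u.2 = F (u.1 ** u.2).
    move=> u hu.
    have [h1 h2] : Ap u.1 /\ pA u.2.
      by move: hu; rewrite mem_cat => /orP [/hs|/ht].
    have [_ gu] := hgs u.2 (map_f _ hu).
    have [b hb] := proj1 (pA_iff _) h2.
    rewrite /F.
    have -> : \sum_(w <- ws) f (pr (u.1 ** u.2 ** w.1)) (pl w.2) =
              \sum_(w <- ws) f u.1 (u.2 ** (w.1 ** pl w.2)).
      apply: eq_big_seq => w hw.
      have hy : pA (pl w.2) by apply/pA_iff; exists w.2.
      have hr : B (pr (u.2 ** w.1)).
        by apply/B_iff; exists (b ** w.1); rewrite hb -pl_mul // /q plprC.
      rewrite mA_ pr_mul // (hbal _ _ _ h1 hy hr).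
      by rewrite -plpr // pl_idem // mA_.
    by rewrite -(bl_sumr hf) -msumr // -/(G ws) -hgG gu.
  have -> : \sum_(u <- s) f u.1 u.2 = \sum_(u <- s) F (u.1 ** u.2).
    by apply: eq_big_seq => u hu; apply: key; rewrite mem_cat hu.
  have -> : \sum_(u <- t) f u.1 u.2 = \sum_(u <- t) F (u.1 ** u.2).
    by apply: eq_big_seq => u hu; apply: key; rewrite mem_cat hu orbT.
  by rewrite -!(fl_sum Flin); move: hst; rewrite /mulmap => ->.
move=> z _.
case: (dec [:: z]) => g [ws [hg hws hgG hgs]].
have [_ zg] := hgs z (mem_head _ _).
exists [seq (pr (z ** w.1), pl w.2) | w <- ws]; split.
  move=> u /mapP [w _ ->] /=; split.
    by apply/Ap_iff; exists (z ** w.1).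
  by apply/pA_iff; exists w.2.
rewrite /mulmap big_map /=.
have -> : \sum_(w <- ws) pr (z ** w.1) ** pl w.2 = \sum_(w <- ws) z ** (w.1 ** pl w.2).
  by apply: eq_bigr => w _; rewrite -plpr // pl_idem // mA_.
by rewrite -msumr // -/(G ws) -hgG zg.
Qed.

Hypothesis hG : galois_on m al (fun _ => True).

Lemma galmap_sum s (f : A -> H -> k) : \sum_(z <- galmap m al s) f z.1 z.2 =
  \sum_(x <- s) \sum_(y <- al x.2) f (x.1 ** y.1) y.2.
Proof. by rewrite /galmap big_flatten big_map; apply: eq_bigr => x _; rewrite big_map. Qed.

Lemma galmap_cat s t : galmap m al (s ++ t) = galmap m al s ++ galmap m al t.
Proof. by rewrite /galmap map_cat flatten_cat. Qed.

Lemma bl_comp (phi : A -> A) (f : A -> H -> k) :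
  (forall a x y, phi (a *: x + y) = a *: phi x + phi y) -> bilin f ->
  bilin (fun x h => f (phi x) h).
Proof. by move=> hl [f1 f2]; split => *; rewrite ?hl ?f1 ?f2. Qed.

Lemma lin_qm X : forall a x y, q (X ** (a *: x + y)) = a *: q (X ** x) + q (X ** y).
Proof. by move=> *; rewrite mlinr q_lin. Qed.
Lemma lin_m X : forall a x y, X ** (a *: x + y) = a *: (X ** x) + X ** y.
Proof. by move=> *; rewrite mlinr. Qed.

Lemma E1 c y : D c -> teq2 (al (q (c ** y))) [seq (q (c ** z.1), z.2) | z <- al y].
Proof.
move=> hc; apply: teq2_trans (al_q _) _.
have := teq2_map q_lin (al_coinv_l y hc).
by rewrite -map_comp.
Qed.

Lemma surj1 a hh : exists s, in2 B B s /\ teq2 (galmap m al s) [:: (q a, hh)].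
Proof.
case: (ex_u (q a)) => v [hv [_ bv]].
case: ((proj2 hG) [:: (v, hh)] (fun _ _ => I)) => s0 [_ hs0].
case: (dec [seq x.2 | x <- s0]) => u [ws [hu hws huG hus]].
exists [seq (q (q a ** x.1 ** w.1), q (w.2 ** x.2)) | x <- s0, w <- ws]; split.
  move=> y /allpairsP [[x w] [hx hw ->]] /=; split; apply/B_iff; by eexists.
move=> f hf; rewrite galmap_sum big_allpairs_dep /= big_cons big_nil addr0.
set b := q a.
transitivity (\sum_(x <- s0) \sum_(z <- al x.2) f (q (b ** (x.1 ** z.1))) z.2); last first.
  have := hs0 (fun c h => f (q (b ** c)) h) (bl_comp (lin_qm b) hf).
  rewrite (galmap_sum s0 (fun c h => f (q (b ** c)) h)) big_cons big_nil addr0 /= bv /b q_idem => <-.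
  by apply: eq_bigr => x _; apply: eq_bigr => z _.
apply: eq_big_seq => x hx.
have [ux2 _] := hus x.2 (map_f _ hx).
transitivity (\sum_(w <- ws) \sum_(z <- al x.2) f (q (b ** x.1 ** (w.1 ** pl w.2) ** z.1)) z.2).
  apply: eq_big_seq => w hw.
  have [hw1 hw2] := hws w hw.
  rewrite (E1 x.2 hw2 (bl_comp (lin_m (q (b ** x.1 ** w.1))) hf)) big_map.
  by apply: eq_bigr => z _ /=; rewrite qq pl_mul // !mA_.
rewrite exchange_big /=.
transitivity (\sum_(z <- al x.2) f (q (b ** x.1 ** u ** z.1)) z.2).
  apply: eq_bigr => z _.
  pose phi := fun c => f (q (b ** x.1 ** c ** z.1)) z.2.
  have hphi : forall a x y, phi (a *: x + y) = a * phi x + phi y.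
    by move=> a' x' y'; rewrite /phi mlinr mlinl q_lin; case: hf => -> _.
  by rewrite huG /G -[RHS]/(phi (\sum_(w <- ws) w.1 ** pl w.2)) (fl_sum hphi).
have e := al_coinv_l x.2 hu (bl_comp (lin_qm (b ** x.1)) hf).
rewrite ux2 big_map /= in e.
rewrite (_ : \sum_(z <- al x.2) f (q (b ** (x.1 ** z.1))) z.2 =
  \sum_(z <- al x.2) f (q (b ** x.1 ** z.1)) z.2); last by apply: eq_bigr => z _; rewrite mA_.
rewrite e; apply: eq_bigr => z _; by rewrite !mA_.
Qed.

Lemma galB_surj (u : seq (A * H)) : (forall v, v \in u -> B v.1) ->
  exists s, in2 B B s /\ teq2 (galmap m al s) u.
Proof.
elim: u => [|[x h] u IH] hu; first by exists [::].
have /B_iff [a ha] : B x by apply: (hu (x, h)); rewrite mem_head.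
case: (surj1 a h) => s1 [hs1 e1].
case: IH => [v hv|s2 [hs2 e2]]; first by apply: hu; rewrite inE hv orbT.
exists (s1 ++ s2); split.
  by move=> w; rewrite mem_cat => /orP [/hs1|/hs2].
rewrite galmap_cat ha; exact: (teq2_cat e1 e2).
Qed.

Definition balB (f : A -> A -> k) := forall x y r, B x -> B y -> (B r /\ D r) ->
  f (x ** r) y = f x (r ** y).

Definition Dws (ws : seq (A * A)) := forall w, w \in ws -> D w.1 /\ D w.2.

Lemma key (f : A -> A -> k) (phi : A -> A) ws ws' x y :
  bilin f -> balB f ->
  (forall a x y, phi (a *: x + y) = a *: phi x + phi y) ->
  (forall c, D c -> D (phi c)) -> (forall u v, phi (u ** v) = phi u ** v) ->
  Dws ws -> Dws ws' -> x ** G ws' = x -> G ws ** y = y ->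
  \sum_(w <- ws) f (q (x ** phi w.1)) (q (w.2 ** y)) =
  \sum_(w' <- ws') f (q (x ** w'.1)) (q (w'.2 ** phi y)).
Proof.
move=> hf hb hl hD hM' hws hws' hx hy.
transitivity (\sum_(w <- ws) \sum_(w' <- ws') f (q (x ** w'.1)) (q (w'.2 ** phi (w.1 ** pl w.2 ** y)))).
  apply: eq_big_seq => w hw; have [hw1 hw2] := hws w hw.
  have ex1 : q (x ** phi w.1) = \sum_(w' <- ws') q (x ** w'.1) ** q (w'.2 ** phi w.1).
    rewrite -{1}hx /G msumr msuml (lin_sum q_lin); apply: eq_bigr => w' _.
    by rewrite qq pl_mul // !mA_.
  rewrite ex1 (bl_suml hf); apply: eq_big_seq => w' hw'; have [hw1' hw2'] := hws' w' hw'.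
  have hB : forall c, B (q c) by move=> c; apply/B_iff; exists c.
  rewrite hb //; last by split; [exact: hB | apply: D_q; apply: coinvM => //; exact: hD].
  by rewrite qq pl_mul // !hM' !mA_.
rewrite exchange_big /=; apply: eq_bigr => w' _.
pose g := fun c => f (q (x ** w'.1)) (q (w'.2 ** phi (c ** y))).
have hg : forall a x y, g (a *: x + y) = a * g x + g y.
  by move=> a x1 y1; rewrite /g mlinl hl mlinr q_lin; case: hf => _ ->.
transitivity (g (G ws)); last by rewrite /g hy.
by rewrite /G (fl_sum hg).
Qed.

Definition valid ws x y := Dws ws /\ x ** G ws = x /\ G ws ** y = y.

Lemma ex_valid3 x y z : exists ws, Dws ws /\
  [/\ x ** G ws = x /\ G ws ** x = x, y ** G ws = y /\ G ws ** y = y & z ** G ws = z /\ G ws ** z = z].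
Proof.
case: (dec [:: x; y; z]) => g [ws [hg hws -> hs]]; exists ws; split => //.
have [h1 h2] : G ws ** x = x /\ x ** G ws = x by apply: hs; rewrite !inE eqxx.
have [h3 h4] : G ws ** y = y /\ y ** G ws = y by apply: hs; rewrite !inE eqxx orbT.
have [h5 h6] : G ws ** z = z /\ z ** G ws = z by apply: hs; rewrite !inE eqxx !orbT.
by [].
Qed.

Lemma ex_valid x y : exists ws, valid ws x y.
Proof. by case: (ex_valid3 x y 0) => ws [h [[h1 h2] [h3 h4] _]]; exists ws. Qed.

Definition wsof x y := proj1_sig (constructive_indefinite_description _ (ex_valid x y)).
Lemma wsofP x y : valid (wsof x y) x y.
Proof. exact: (proj2_sig (constructive_indefinite_description _ (ex_valid x y))). Qed.

Definition Gf (f : A -> A -> k) ws x y := \sum_(w <- ws) f (q (x ** w.1)) (q (w.2 ** y)).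
Definition Ff f x y := Gf f (wsof x y) x y.

Lemma Gf_indep f ws ws' x y : bilin f -> balB f -> Dws ws -> Dws ws' ->
  x ** G ws' = x -> G ws ** y = y -> Gf f ws x y = Gf f ws' x y.
Proof.
move=> hf hb hws hws' hx hy.
exact: (key (phi := id) hf hb (fun _ _ _ => erefl) (fun c h => h) (fun _ _ => erefl) hws hws' hx hy).
Qed.

Lemma Ff_eq f ws x y : bilin f -> balB f -> valid ws x y -> Ff f x y = Gf f ws x y.
Proof.
move=> hf hb [hws [hx hy]]; have [h0 [h1 h2]] := wsofP x y.
by apply: Gf_indep.
Qed.

Lemma Gf_linl f ws y : bilin f -> forall a x1 x2, Gf f ws (a *: x1 + x2) y = a * Gf f ws x1 y + Gf f ws x2 y.
Proof.
move=> [f1 f2] a x1 x2; rewrite /Gf mulr_sumr -big_split /=; apply: eq_bigr => w _.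
by rewrite mlinl q_lin f1.
Qed.
Lemma Gf_linr f ws x : bilin f -> forall a y1 y2, Gf f ws x (a *: y1 + y2) = a * Gf f ws x y1 + Gf f ws x y2.
Proof.
move=> [f1 f2] a y1 y2; rewrite /Gf mulr_sumr -big_split /=; apply: eq_bigr => w _.
by rewrite mlinr q_lin f2.
Qed.

Lemma Ff_bilin f : bilin f -> balB f -> bilin (Ff f).
Proof.
move=> hf hb; split.
  move=> y a x1 x2.
  case: (ex_valid3 x1 x2 y) => ws [hws [[h1 h2] [h3 h4] [h5 h6]]].
  have hx : (a *: x1 + x2) ** G ws = a *: x1 + x2 by rewrite mlinl h1 h3.
  rewrite !(Ff_eq (ws := ws)) //; first exact: Gf_linl.
move=> x a y1 y2.
case: (ex_valid3 y1 y2 x) => ws [hws [[h1 h2] [h3 h4] [h5 h6]]].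
have hy : G ws ** (a *: y1 + y2) = a *: y1 + y2 by rewrite mlinr h2 h4.
rewrite !(Ff_eq (ws := ws)) //; first exact: Gf_linr.
Qed.

Lemma Ff_bal f : bilin f -> balB f -> forall x y r, D r -> Ff f (x ** r) y = Ff f x (r ** y).
Proof.
move=> hf hb x y r hr.
case: (ex_valid3 x r y) => ws [hws [[h1 h2] [h3 h4] [h5 h6]]].
have v1 : valid ws (x ** r) y by split => //; split => //; rewrite mA_ h3.
have v2 : valid ws x (r ** y) by split => //; split => //; rewrite -mA_ h4.
rewrite (Ff_eq hf hb v1) (Ff_eq hf hb v2).
have hl : forall a x y, r ** (a *: x + y) = a *: (r ** x) + r ** y by move=> *; rewrite mlinr.
have := key hf hb hl (fun c hc => coinvM hr hc) (fun u v => esym (mA_ r u v)) hws hws h1 h6.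
rewrite /Gf => <-; apply: eq_bigr => w _; by rewrite mA_.
Qed.

Lemma Ff_B f x y : bilin f -> balB f -> B x -> B y -> Ff f x y = f x y.
Proof.
move=> hf hb /B_iff [a ->] /B_iff [b ->].
case: (ex_valid (q a) (q b)) => ws hv.
rewrite (Ff_eq hf hb hv); case: hv => hws [hx hy].
rewrite /Gf.
have hB : forall c, B (q c) by move=> c; apply/B_iff; exists c.
transitivity (\sum_(w <- ws) f (q a) (q (w.1 ** pl w.2) ** q b)).
  apply: eq_big_seq => w hw; have [hw1 hw2] := hws w hw.
  have hr : B (q w.1) /\ D (q w.1) by split; [exact: hB | exact: D_q].
  rewrite q_bw (hb _ _ _ (hB a) (hB (w.2 ** q b)) hr) q_wb.
  by rewrite -mA_ qq.
transitivity (f (q a) (\sum_(w <- ws) q (w.1 ** pl w.2) ** q b)); first by rewrite (bl_sumr hf).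
rewrite -(msuml ws (fun w => q (w.1 ** pl w.2)) (q b)) -(lin_sum q_lin ws (fun w => w.1 ** pl w.2)).
by rewrite -/(G ws) -q_wb hy q_idem.
Qed.

Lemma galB_inj s t : in2 B B s -> in2 B B t -> teq2 (galmap m al s) (galmap m al t) ->
  bal_eq m B B (fun x => B x /\ D x) s t.
Proof.
move=> hs ht hst f hf hb.
have := (proj1 hG) s t (fun _ _ => conj I I) (fun _ _ => conj I I) hst (Ff f)
  (Ff_bilin hf hb) (fun x y r _ _ hr => Ff_bal hf hb x y (proj2 hr)).
have -> : \sum_(u <- s) Ff f u.1 u.2 = \sum_(u <- s) f u.1 u.2.
  by apply: eq_big_seq => u /hs [h1 h2]; rewrite Ff_B.
have -> : \sum_(u <- t) Ff f u.1 u.2 = \sum_(u <- t) f u.1 u.2.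
  by apply: eq_big_seq => u /ht [h1 h2]; rewrite Ff_B.
by [].
Qed.
End Main.

Unset Implicit Arguments.
Set Strict Implicit.

Theorem mainTheorem7 (k : fieldType) (H : algType k) (D : H -> seq (H * H))
    (eps : H -> k) (S : H -> H) (A : lmodType k) (m : A -> A -> A)
    (al : A -> seq (A * H)) (lam rho : A -> A) :
  is_hopf D eps S ->
  galois_coaction D eps m al ->
  coinv_local_units m al ->
  is_multiplier m (coinv al) lam rho ->
  mult_idem (coinv al) lam rho ->
  mult_full m (coinv al) lam ->
  let B := pAp_set m al lam rho in
  let pA := pA_set m al lam in
  let Ap := Ap_set m al rho in
  let T := fun _ : A => True in
  (* alpha restricts to a Galois coaction beta on B = pAp *)
  [/\ subspace B, mulclosed m B B B, subcomod al B & galois_on m al B] /\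
  (* (B,beta) and (A,alpha) are H-equivariantly Morita equivalent via the
     context [[B, pA], [Ap, A]] (all multiplications those of A) *)
  [/\ subspace pA /\ subspace Ap,
      subcomod al pA /\ subcomod al Ap,
      [/\ mulclosed m B pA pA, mulclosed m pA Ap B, mulclosed m pA T pA,
          mulclosed m Ap B Ap & mulclosed m T Ap Ap],
      mult_bij m pA Ap T B &
      mult_bij m Ap pA B T].
Proof.
move=> _ [hca hGal] hlu hM hI hF B pA Ap T.
have mA := ca_alg hca.
have alM := al_mul hca.
split.
  split.
  - by apply: (@subB k H A m al lam rho).
  - by apply: (@mc_BBB k H A m al lam rho).
  - by apply: (@scB k H A m al lam rho).
  - split; [by apply: (@galB_inj k H A m al lam rho) | by apply: (@galB_surj k H A m al lam rho)].
split.
- by split; [apply: (@subpA k H A m al lam rho) | apply: (@subAp k H A m al lam rho)].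
- by split; [apply: (@scpA k H A m al lam rho) | apply: (@scAp k H A m al lam rho)].
- split.
  + by apply: (@mc_BpA k H A m al lam rho).
  + by apply: (@mc_pAAp k H A m al lam rho).
  + by apply: (@mc_pAT k H A m al lam rho).
  + by apply: (@mc_ApB k H A m al lam rho).
  + by apply: (@mc_TAp k H A m al lam rho).
- by apply: (@mb1 k H A m al lam rho).
- by apply: (@mb2 k H A m al lam rho).
Qed.
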